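(* Let $f:\mathbb{R}^m\times\mathbb{R}\to\mathbb{R}^m$ be Lipschitz continuous and let $y$ solve the initial value problem $\dot y = f(y,t)$, $t\in(0,T]$, $y(0)=y_0$. Let $S$ be a linear functional on $\mathbb{R}^m$ satisfying the Lipschitz condition $|S(y_1(t))-S(y_2(t))|\le K\|y_1(t)-y_2(t)\|_{\mathbb{R}^m}$ for some constant $K>0$. Let $Y(t)$ be a continuous numerical approximation of $y$ computed with step-size $h$ such that $$\|y(t)-Y(t)\|_{\mathbb{R}^m}\le C h^p\quad\text{for all } t\in[0,T],$$ for some constant $C>0$. For a threshold value $R$, let $t_t=\min_{t\in(0,T]}\arg(S(y(t))=R)$ and $t_c=\min_{t\in(0,T]}\arg(S(Y(t))=R)$ (so that $S(y(t_t))=R=S(Y(t_c))$), and let $e_Q=t_t-t_c$. Assume that $t\mapsto S(y(t))$ is continuously differentiable in a neighborhood $B$ which contains both $t_t$ and $t_c$, and that there exists $M>0$ such that $\left|\frac{dS}{dt}(y(t))\right|>M$ for all $t\in B$. Then $$e_Q\le \widehat{C}h^p$$ for some constant $\widehat{C}$ which depends on $M$, $C$ and $K$.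
   Context: $\|\cdot\|_{\mathbb{R}^m}$ is the Euclidean norm. It is assumed that the threshold $S(y(t))=R$ is crossed at some time in $(0,T)$, so $t_t$ exists; likewise $t_c$ is the first time the computed functional reaches $R$. *)

(* Defs.v *)
From Stdlib Require Import Reals List.
From Coquelicot Require Import Coquelicot.
Import ListNotations.
Open Scope R_scope.

(* A vector of R^m is represented by its components x 0, ..., x (m-1);
   components of index >= m are ignored by everything below. *)
Definition vec := nat -> R.

Definition vsub (x y : vec) : vec := fun i => x i - y i.

Definition enorm (m : nat) (x : vec) : R :=
  sqrt (fold_right Rplus 0 (map (fun i => (x i) ^ 2) (seq 0 m))).

Definition lipschitz_field (m : nat) (f : vec -> R -> vec) : Prop :=
  exists L : R, 0 <= L /\
    forall (u v : vec) (t : R), enorm m (vsub (f u t) (f v t)) <= L * enorm m (vsub u v).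

Definition is_derive_within (D : R -> Prop) (g : R -> R) (t l : R) : Prop :=
  filterlim (fun s => (g s - g t) / (s - t))
            (within (fun s => D s /\ s <> t) (locally t)) (locally l).

Definition solves_ivp (m : nat) (f : vec -> R -> vec) (T : R) (y0 : vec)
    (y : R -> vec) : Prop :=
  (forall i, (i < m)%nat -> y 0 i = y0 i) /\
  (forall i, (i < m)%nat -> forall t, 0 <= t <= T ->
      filterlim (fun s => y s i) (within (fun s => 0 <= s <= T) (locally t)) (locally (y t i))) /\
  (forall i, (i < m)%nat -> forall t, 0 < t <= T ->
      is_derive_within (fun s => 0 < s <= T) (fun s => y s i) t (f (y t) t i)).

Definition linear_functional (m : nat) (S : vec -> R) : Prop :=
  (forall x y : vec, (forall i, (i < m)%nat -> x i = y i) -> S x = S y) /\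
  (forall (a b : R) (x y : vec), S (fun i => a * x i + b * y i) = a * S x + b * S y).

Definition continuous_on_0T (m : nat) (T : R) (Y : R -> vec) : Prop :=
  forall i, (i < m)%nat -> forall t, 0 <= t <= T ->
    filterlim (fun s => Y s i) (within (fun s => 0 <= s <= T) (locally t)) (locally (Y t i)).

Definition first_hit (g : R -> R) (Rth T t : R) : Prop :=
  0 < t <= T /\ g t = Rth /\ forall s, 0 < s < t -> g s <> Rth.

(* Main.v *)
Require Import Defs.
From Stdlib Require Import Reals Lra.
From Coquelicot Require Import Coquelicot.
Open Scope R_scope.

Theorem theorem1 :
  exists Chat : R -> R -> R -> R,
  forall (m : nat) (f : vec -> R -> vec) (T : R) (y0 : vec) (y : R -> vec)
         (S : vec -> R) (K : R) (Y : R -> vec) (h p C Rth tt tc : R)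
         (a b M : R),
    0 < T ->
    lipschitz_field m f ->
    solves_ivp m f T y0 y ->
    linear_functional m S ->
    0 < K ->
    (forall u v : vec, Rabs (S u - S v) <= K * enorm m (vsub u v)) ->
    0 < h -> 0 < p -> 0 < C ->
    continuous_on_0T m T Y ->
    (forall t, 0 <= t <= T -> enorm m (vsub (y t) (Y t)) <= C * Rpower h p) ->
    first_hit (fun t => S (y t)) Rth T tt ->
    first_hit (fun t => S (Y t)) Rth T tc ->
    (* B = (a,b) is a neighbourhood containing tt and tc *)
    a < tt < b -> a < tc < b ->
    (forall t, a < t < b ->
       ex_derive (fun s => S (y s)) t /\
       continuous (Derive (fun s => S (y s))) t) ->
    0 < M ->
    (forall t, a < t < b -> Rabs (Derive (fun s => S (y s)) t) > M) ->
    Rabs (tt - tc) <= Chat M C K * Rpower h p.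
Proof.
  exists (fun M C K => K * C / M).
  intros m f T y0 y S K Y h p C Rth tt tc a b M
    HT _ _ _ HK HS Hh Hp HC _ Herr [Htt1 [Htt2 _]] [Htc1 [Htc2 _]] Hab1 Hab2 Hder HM Hbd.
  set (g := fun s => S (y s)).
  assert (Hin : forall x, Rmin tc tt <= x <= Rmax tc tt -> a < x < b).
  { intros x [H1 H2].
    pose proof (Rmin_l tc tt); pose proof (Rmin_r tc tt).
    pose proof (Rmax_l tc tt); pose proof (Rmax_r tc tt).
    destruct (Rle_dec tc tt).
    - rewrite Rmin_left in H1 by lra. rewrite Rmax_right in H2 by lra. lra.
    - rewrite Rmin_right in H1 by lra. rewrite Rmax_left in H2 by lra. lra. }
  destruct (MVT_gen g tc tt (Derive g)) as [c [Hc Heq]].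
  - intros x Hx. apply Derive_correct. apply (Hder x).
    apply Hin; lra.
  - intros x Hx. apply continuity_pt_filterlim.
    apply (ex_derive_continuous (K:=R_AbsRing) (V:=R_NormedModule) g x). apply (Hder x). apply Hin; exact Hx.
  - assert (Hc' := Hin c Hc).
    assert (Hd := Hbd c Hc').
    fold g in Hd.
    assert (E : Rabs (g tt - g tc) <= K * (C * Rpower h p)).
    { unfold g. simpl in Htt2. rewrite Htt2. rewrite <- Htc2.
      rewrite Rabs_minus_sym.
      eapply Rle_trans. apply HS.
      apply Rmult_le_compat_l. lra. apply Herr. lra. }
    rewrite Heq in E. rewrite Rabs_mult in E.
    assert (Hpos : 0 <= Rabs (tt - tc)) by apply Rabs_pos.
    assert (M * Rabs (tt - tc) <= K * (C * Rpower h p)).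
    { eapply Rle_trans; [|exact E]. apply Rmult_le_compat_r; lra. }
    apply (Rmult_le_reg_l M); [lra|].
    replace (M * (K * C / M * Rpower h p)) with (K * (C * Rpower h p)) by (field; lra).
    exact H.
Qed.
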